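(* Let $r\ge1$ and $$\Psi(x^{-1},\hbar):=\sum_{n\ge0}\frac{x^{-rn}}{n!\,\hbar^n r^n}\prod_{j=1}^{rn-1}(1+j\hbar),$$ a formal power series in $x^{-1}$ (the principal specialization of the strictly monotone orbifold Hurwitz generating function). Then $$\Big[\hat x^{1/\hbar}\big(\hat y^r-\hat x\hat y+1\big)\hat x^{-1/\hbar}\Big]\Psi(x^{-1},\hbar)=0,\qquad\hat x=x\cdot,\ \hat y=-\hbar\frac{\partial}{\partial x},$$ equivalently $\big[(-\hbar\partial_x)^r+\hbar x\partial_x+1\big]\big(x^{-1/\hbar}\Psi\big)=0$ after multiplication by $x^{1/\hbar}$, i.e. $\big[(x^{-1}-\hbar\partial_x)^r+\hbar x\partial_x\big]\Psi=0$.
   Context: The empty product (for $n=0$ and, when $r=1$, for $n=1$) equals $1$. Conjugation by $x^{\pm1/\hbar}$ is understood formally: $x^{1/\hbar}\partial_x x^{-1/\hbar}=\partial_x-\frac{1}{\hbar x}$. *)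

(* Defs.v *)
From HB Require Import structures.
From mathcomp Require Import all_boot all_order all_algebra fraction.
Set Implicit Arguments. Unset Strict Implicit. Unset Printing Implicit Defensive.
Import Order.TTheory GRing.Theory Num.Theory.
Local Open Scope ring_scope.

Definition Qh : fieldType := {fraction {poly rat}}.
Definition hbar : Qh := @FracField.tofrac {poly rat} 'X.

(* Two-sided formal series in x: f k = coefficient of x^k (k : int).
   Shifts and derivative are coefficientwise well defined. *)
Definition xseries := int -> Qh.

Definition xs_mulX (f : xseries) : xseries := fun k => f (k - 1).
Definition xs_mulXinv (f : xseries) : xseries := fun k => f (k + 1).
Definition xs_deriv (f : xseries) : xseries := fun k => (k + 1)%:~R * f (k + 1).

Definition psi_coef (r n : nat) : Qh :=
  (n`!%:R * hbar ^+ n * (r ^ n)%:R)^-1 *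
  \prod_(1 <= j < r * n) (1 + j%:R * hbar).

(* Psi_series(x^{-1}, hbar) = sum_n psi_coef r n x^{-rn}, as an x-series *)
Definition Psi_series (r : nat) : xseries := fun k =>
  if (k <= 0) && (r %| `|k|)%N then psi_coef r (`|k| %/ r)%N else 0.

Definition xs_Yop (f : xseries) : xseries := fun k => xs_mulXinv f k - hbar * xs_deriv f k.

(* Main.v *)
Require Import Defs.
From HB Require Import structures.
From mathcomp Require Import all_boot all_order all_algebra fraction.
From mathcomp Require Import ring lra zify.
Import GRing.Theory.
Import Num.Theory.
Local Open Scope ring_scope.

Lemma natQh_neq0 (n : nat) : (0 < n)%N -> (n%:R : Qh) != 0.
Proof.
move=> hn.
have -> : (n%:R : Qh) = FracField.tofrac (n%:R : {poly rat}) by rewrite rmorph_nat.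
by rewrite tofrac_eq0 -polyC_natr polyC_eq0 pnatr_eq0 -lt0n.
Qed.

Lemma hbar_neq0 : hbar != 0.
Proof. by rewrite /hbar tofrac_eq0 polyX_eq0. Qed.

Definition Pr (n : nat) (k : int) : Qh :=
  \prod_(i < n) (1 - hbar * (k + (i.+1)%:Z)%:~R).

Lemma iterY (n : nat) (f : xseries) (k : int) :
  @ssrnat.iter xseries n xs_Yop f k = Pr n k * f (k + n%:Z).
Proof.
elim: n k => [|n IH] k /=; first by rewrite /Pr big_ord0 mul1r addr0.
rewrite /xs_Yop /xs_mulXinv /xs_deriv IH.
have -> : (k + (n.+1)%:Z) = (k + 1 + n%:Z) by rewrite -addrA; congr (_ + _); lia.
rewrite /Pr big_ord_recl.
have -> : \prod_(i < n) (1 - hbar * (k + (lift ord0 i).+1)%:~R) =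
          \prod_(i < n) (1 - hbar * (k + 1 + (i.+1)%:Z)%:~R).
  apply: eq_bigr => i _; congr (1 - hbar * _%:~R).
  rewrite /= /bump /= -addrA; congr (_ + _); lia.
rewrite (_ : (k + (@ord0 n).+1%:Z) = k + 1) //.
ring.
Qed.

Definition F (j : nat) : Qh := 1 + j%:R * hbar.

Lemma prod1 (m : nat) : \prod_(1 <= j < m) F j = \prod_(0 <= j < m) F j.
Proof.
case: m => [|m]; first by rewrite !big_geq.
by rewrite [in RHS]big_ltn // /F mul0r addr0 mul1r.
Qed.

Lemma Pr_eq (r n : nat) :
  Pr r (- ((r * n.+1)%N)%:Z) = \prod_((r * n)%N <= j < (r * n + r)%N) F j.
Proof.
rewrite -{1}(add0n (r * n)%N) big_addn.
rewrite addKn big_mkord /Pr.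
rewrite (reindex_inj rev_ord_inj) /=.
apply: eq_bigr => i _; rewrite /F.
have hi := ltn_ord i.
rewrite (_ : (- (r * n.+1)%N%:Z + ((r - i.+1).+1)%:Z) = - ((i + r * n)%N)%:Z); last by lia.
by rewrite mulrNz mulrN opprK -pmulrn mulrC.
Qed.

Lemma key (r n : nat) : (0 < r)%N ->
  Pr r (- ((r * n.+1)%N)%:Z) * psi_coef r n +
  hbar * ((- ((r * n.+1)%N)%:Z)%:~R * psi_coef r n.+1) = 0.
Proof.
move=> hr.
rewrite Pr_eq /psi_coef.
rewrite (_ : \prod_(1 <= j < r * n) (1 + j%:R * hbar) = \prod_(0 <= j < r * n) F j); last exact: prod1.
rewrite (_ : \prod_(1 <= j < r * n.+1) (1 + j%:R * hbar) = \prod_(0 <= j < r * n.+1) F j); last exact: prod1.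
have -> : \prod_(0 <= j < (r * n.+1)%N) F j =
   \prod_(0 <= j < (r * n)%N) F j * \prod_((r * n)%N <= j < (r * n + r)%N) F j.
  by rewrite -big_cat_nat ?leq_addr // mulnS addnC.
rewrite (_ : (- ((r * n.+1)%N)%:Z)%:~R = - (r%:R * n.+1%:R) :> Qh); last first.
  by rewrite mulrNz -pmulrn natrM.
rewrite factS expnS exprS !natrM.
move: (\prod_(0 <= j < (r * n)%N) F j) (\prod_((r * n)%N <= j < (r * n + r)%N) F j) => A B.
have h1 := hbar_neq0.
have h2 : (n`!%:R : Qh) != 0 by apply: natQh_neq0; exact: fact_gt0.
have h3 : ((r ^ n)%:R : Qh) != 0 by apply: natQh_neq0; rewrite expn_gt0 hr.
have h4 : (r%:R : Qh) != 0 by apply: natQh_neq0.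
have h5 : (n.+1%:R : Qh) != 0 by apply: natQh_neq0.
have h6 : hbar ^+ n != 0 := expf_neq0 n h1.
move: h1 h2 h3 h4 h5 h6.
move: hbar (n`!%:R : Qh) ((r ^ n)%:R : Qh) (r%:R : Qh) (n.+1%:R : Qh) (hbar ^+ n) => h a b c d e h1 h2 h3 h4 h5 h6.
rewrite !invfM.
have -> : forall X Y : Qh, X + Y = X * ((h*h^-1)*(c*c^-1)*(d*d^-1)) + Y.
  by move=> X Y; rewrite (mulfV h1) (mulfV h4) (mulfV h5) !mulr1.
ring.
Qed.


Lemma Psi_at (r m : nat) : (0 < r)%N -> Psi_series r (- ((r * m)%N)%:Z) = psi_coef r m.
Proof.
move=> hr; rewrite /Psi_series abszN absz_nat dvdn_mulr // mulKn //.
by rewrite andbT oppr_le0.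
Qed.

Lemma cond_inv (r : nat) (k : int) : (0 < r)%N -> (k <= 0) && (r %| `|k|)%N ->
  k = - ((r * (`|k| %/ r))%N)%:Z.
Proof.
move=> hr /andP [h1 h2]; rewrite mulnC divnK //; lia.
Qed.

Theorem proposition7p1 (r : nat) (hr : (1 <= r)%N) :
  forall k : int, @ssrnat.iter xseries r xs_Yop (Psi_series r) k + hbar * xs_mulX (xs_deriv (Psi_series r)) k = 0.
Proof.
move=> k; rewrite iterY /xs_mulX /xs_deriv subrK.
case: (boolP ((k <= 0) && (r %| `|k|)%N)) => hk.
  have := cond_inv _ _ hr hk; move: (`|k| %/ r)%N => m ->.
  case: m => [|n].
    rewrite muln0 /= (_ : Psi_series r (- 0%:Z + r%:Z) = 0).
      by rewrite oppr0 mulr0 add0r mulr0z mul0r mulr0.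
    rewrite /Psi_series ifF //; lia.
  rewrite (_ : - ((r * n.+1)%N)%:Z + r%:Z = - ((r * n)%N)%:Z); last by lia.
  by rewrite !Psi_at // key.
rewrite {2}/Psi_series (negbTE hk) mulr0 mulr0 addr0.
rewrite /Psi_series; case: ifP => [hk'|_]; last by rewrite mulr0.
have := cond_inv _ _ hr hk'; move: (_ %/ r)%N => m hm.
exfalso; move/negP: hk; apply.
rewrite (_ : k = - ((r * m.+1)%N)%:Z); last by lia.
by rewrite oppr_le0 /= abszN absz_nat dvdn_mulr.
Qed.
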